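(* (i) If an entanglement witness $W$ on $\mathbb{C}^m\otimes\mathbb{C}^n$ can be locally projected to an entanglement witness supported on $\mathbb{C}^2\otimes\mathbb{C}^n$, then it can be further locally projected to an entanglement witness supported on $\mathbb{C}^2\otimes\mathbb{C}^2$. (ii) If $\rho_{AB}$ is a $1$-undistillable NPT state on $\mathbb{C}^m\otimes\mathbb{C}^n$, then $\rho_{AB}^\Gamma$ (which is an entanglement witness) cannot be locally projected to an entanglement witness supported on $\mathbb{C}^2\otimes\mathbb{C}^n$. (iii) If an entanglement witness can be locally projected to a non-decomposable entanglement witness that detects some PPT entangled state, then the original entanglement witness is itself non-decomposable.
   Context: An entanglement witness (EW) is a Hermitian matrix $W$ with $\mathrm{tr}(W\sigma)\ge0$ for all separable states $\sigma$ and $\mathrm{tr}(W\sigma)<0$ for some entangled state; it detects $\rho$ if $\mathrm{tr}(W\rho)<0$. A Hermitian matrix $W$ on $\mathbb{C}^m\otimes\mathbb{C}^n$ is locally projected to $W'=(U\otimes V)W(U\otimes V)^\dagger$ supported on $\mathbb{C}^p\otimes\mathbb{C}^q$ for matrices $U\in\mathcal{M}_{p,m}(\mathbb{C})$, $V\in\mathcal{M}_{q,n}(\mathbb{C})$. $M^\Gamma$ is the partial transpose with respect to the first subsystem; PPT/NPT means $\rho^\Gamma$ is / is not positive semidefinite. A state $\rho$ on $\mathbb{C}^m\otimes\mathbb{C}^n$ is $1$-undistillable if $(U\otimes V)\rho(U\otimes V)^\dagger$ is PPT for every $U\in\mathcal{M}_{2,m}(\mathbb{C})$ and every $V\in\mathcal{M}_{n}(\mathbb{C})$.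 A Hermitian $W$ is decomposable if $W=X^\Gamma+Y$ with $X,Y$ positive semidefinite. *)

(* Defs.v *)
From HB Require Import structures.
From mathcomp Require Import all_boot all_order all_algebra.
From mathcomp Require Import reals.
From mathcomp Require Import complex mxtens.
Set Implicit Arguments. Unset Strict Implicit. Unset Printing Implicit Defensive.
Import Order.TTheory GRing.Theory Num.Theory.
Local Open Scope ring_scope.

Section QInfo.
Variable R : realType.
Local Notation C := (complex R).

Definition adj (k l : nat) (A : 'M[C]_(k, l)) : 'M[C]_(l, k) :=
  (map_mx Num.conj A)^T.

Definition hermitian (k : nat) (A : 'M[C]_k) : Prop := adj A = A.

Definition psd (k : nat) (A : 'M[C]_k) : Prop :=
  hermitian A /\ forall v : 'cV[C]_k, 0 <= (adj v *m A *m v) 0 0.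

Definition state (k : nat) (A : 'M[C]_k) : Prop := psd A /\ \tr A = 1.

(* Kronecker product A (x) B with the standard index (i,j) |-> i*n + j *)
Definition kron (m1 n1 m2 n2 : nat) (A : 'M[C]_(m1, n1)) (B : 'M[C]_(m2, n2))
  : 'M[C]_(m1 * m2, n1 * n2) := tensmx A B.

Definition separable (m n : nat) (s : 'M[C]_(m * n)) : Prop :=
  exists (N : nat) (p : 'I_N -> C) (A : 'I_N -> 'M[C]_m) (B : 'I_N -> 'M[C]_n),
    (forall i, 0 <= p i /\ state (A i) /\ state (B i)) /\
    \sum_(i < N) p i = 1 /\
    s = \sum_(i < N) p i *: kron (A i) (B i).

(* partial transpose with respect to the first subsystem:
   (M^Gamma)_{(a,b),(c,d)} = M_{(c,b),(a,d)} *)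
Definition ptrans (m n : nat) (M : 'M[C]_(m * n)) : 'M[C]_(m * n) :=
  \matrix_(i, j)
    M (@mxtens_index m n ((mxtens_unindex j).1, (mxtens_unindex i).2))
      (@mxtens_index m n ((mxtens_unindex i).1, (mxtens_unindex j).2)).

Definition PPT (m n : nat) (r : 'M[C]_(m * n)) : Prop := psd (@ptrans m n r).
Definition NPT (m n : nat) (r : 'M[C]_(m * n)) : Prop := ~ @PPT m n r.

Definition EW (m n : nat) (W : 'M[C]_(m * n)) : Prop :=
  hermitian W /\
  (forall s : 'M[C]_(m * n), @separable m n s -> 0 <= \tr (W *m s)) /\
  (exists r : 'M[C]_(m * n), state r /\ ~ @separable m n r /\ \tr (W *m r) < 0).

Definition detects (k : nat) (W r : 'M[C]_k) : Prop := \tr (W *m r) < 0.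

Definition lproj (p q m n : nat) (U : 'M[C]_(p, m)) (V : 'M[C]_(q, n))
  (W : 'M[C]_(m * n)) : 'M[C]_(p * q) :=
  kron U V *m W *m adj (kron U V).

Definition undistillable1 (m n : nat) (r : 'M[C]_(m * n)) : Prop :=
  forall (U : 'M[C]_(2, m)) (V : 'M[C]_(n, n)), @PPT 2 n (lproj U V r).

Definition decomposable (m n : nat) (W : 'M[C]_(m * n)) : Prop :=
  exists X Y : 'M[C]_(m * n), psd X /\ psd Y /\ W = @ptrans m n X + Y.

End QInfo.
Arguments ptrans {R} m n M.
Arguments separable {R} m n s.
Arguments PPT {R} m n r.
Arguments NPT {R} m n r.
Arguments EW {R} m n W.
Arguments undistillable1 {R} m n r.
Arguments decomposable {R} m n W.

(* Main.v *)
Require Import Defs.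
From HB Require Import structures.
From mathcomp Require Import all_boot all_order all_algebra.
From mathcomp Require Import reals.
From mathcomp Require Import complex mxtens.
From mathcomp Require spectral.
From Stdlib Require Import Classical.
From mathcomp Require Import ring.
Set Implicit Arguments. Unset Strict Implicit. Unset Printing Implicit Defensive.
Import Order.TTheory GRing.Theory Num.Theory.
Local Open Scope ring_scope.

Section Aux.
Variable R : realType.
Local Notation C := (complex R).

Lemma adjE k l (A : 'M[C]_(k, l)) i j : adj A i j = (A j i)^*.
Proof. by rewrite /adj !mxE. Qed.

Lemma adjK k l (A : 'M[C]_(k, l)) : adj (adj A) = A.
Proof. by apply/matrixP => i j; rewrite !adjE conjCK. Qed.

Lemma adjM k l p (A : 'M[C]_(k, l)) (B : 'M[C]_(l, p)) :
  adj (A *m B) = adj B *m adj A.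
Proof.
apply/matrixP => i j; rewrite adjE !mxE rmorph_sum; apply: eq_bigr => h _.
by rewrite !adjE rmorphM mulrC.
Qed.

Lemma adjD k l (A B : 'M[C]_(k, l)) : adj (A + B) = adj A + adj B.
Proof. by apply/matrixP => i j; rewrite /adj !mxE rmorphD. Qed.

Lemma adjZ k l a (A : 'M[C]_(k, l)) : adj (a *: A) = a^* *: adj A.
Proof. by apply/matrixP => i j; rewrite /adj !mxE rmorphM. Qed.

Lemma adj_kron m1 n1 m2 n2 (A : 'M[C]_(m1, n1)) (B : 'M[C]_(m2, n2)) :
  adj (kron A B) = kron (adj A) (adj B).
Proof.
apply/matrixP => i j; by rewrite /adj /kron !mxE rmorphM.
Qed.

Lemma kron_mul m n p q r s (A : 'M[C]_(m,n)) (B : 'M[C]_(p,q))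
  (Cm : 'M[C]_(n, r)) (D : 'M[C]_(q, s)) :
  kron A B *m kron Cm D = kron (A *m Cm) (B *m D).
Proof. exact: tensmx_mul. Qed.

Lemma adj_delta k l (i : 'I_k) (j : 'I_l) : adj (delta_mx i j : 'M[C]_(k,l)) = delta_mx j i.
Proof.
by apply/matrixP => a b; rewrite adjE !mxE conjC_nat andbC.
Qed.

Lemma adj_cst k l (A : 'M[C]_(k, l)) : adj A = trmx (map_mx Num.conj A).
Proof. by []. Qed.


Definition quad k (M : 'M[C]_k) (v : 'cV[C]_k) : C := (adj v *m M *m v) 0 0.

Lemma adj11 (A : 'M[C]_1) : adj A 0 0 = (A 0 0)^*.
Proof. by rewrite adjE. Qed.

Lemma quad_conj k (M : 'M[C]_k) v : Defs.hermitian M -> (quad M v)^* = quad M v.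
Proof.
move=> hM; rewrite /quad -adj11 !adjM adjK.
by rewrite hM mulmxA.
Qed.

Lemma quad_real k (M : 'M[C]_k) v : Defs.hermitian M -> quad M v \is Num.real.
Proof. by move=> hM; rewrite CrealE quad_conj. Qed.

Lemma adjv_ge0 k (w : 'cV[C]_k) : 0 <= (adj w *m w) 0 0.
Proof.
rewrite mxE; apply: sumr_ge0 => i _; rewrite adjE mulrC; exact: mul_conjC_ge0.
Qed.

Lemma adjv_gt0 k (w : 'cV[C]_k) : w != 0 -> 0 < (adj w *m w) 0 0.
Proof.
move=> wn0; rewrite lt_def adjv_ge0 andbT; apply/negP => /eqP h.
move: h; rewrite mxE => /psumr_eq0P h.
have {}h : forall i, w i 0 = 0.
  move=> i; have hi : adj w 0 i * w i 0 = 0.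
    by apply: h => // j _; rewrite adjE mulrC mul_conjC_ge0.
  by apply/eqP; rewrite -mul_conjC_eq0 mulrC -adjE hi.
by move/eqP: wn0; apply; apply/matrixP => i j; rewrite (ord1 j) h mxE.
Qed.

Lemma psd_lproj k l (A : 'M[C]_(l, k)) (M : 'M[C]_k) :
  psd M -> psd (A *m M *m adj A).
Proof.
move=> [hM qM]; split.
  by rewrite /Defs.hermitian !adjM adjK hM mulmxA.
move=> v; have := qM (adj A *m v).
by rewrite adjM adjK !mulmxA.
Qed.

Lemma tr_rank1 k (M : 'M[C]_k) x : \tr (M *m (x *m adj x)) = quad M x.
Proof. by rewrite mulmxA mxtrace_mulC trace_mx11 /quad mulmxA. Qed.


Lemma adj_tC k l (A : 'M[C]_(k, l)) : map_mx Num.conj (trmx A) = adj A.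
Proof. by rewrite /adj map_trmx. Qed.

Lemma psd_decomp k (A : 'M[C]_k) : psd A ->
  exists (d : 'I_k -> C) (u : 'I_k -> 'cV[C]_k),
    (forall i, 0 <= d i) /\ A = \sum_i d i *: (u i *m adj (u i)).
Proof.
move=> [hA qA].
have nA : A \is spectral.normalmx.
  by apply/spectral.normalmxP; rewrite adj_tC hA.
set P := spectral.spectralmx A; set D := spectral.spectral_diag A.
have eA : A = invmx P *m diag_mx D *m P by exact/spectral.orthomx_spectralP.
have uP : P \is spectral.unitarymx := spectral.spectral_unitarymx A.
have iP : invmx P = adj P by rewrite spectral.invmx_unitary // adj_tC.
have PP : P *m adj P = 1%:M by rewrite -adj_tC; exact/spectral.unitarymxP.
exists (fun i => D 0 i), (fun i => adj (delta_mx 0 i *m P)); split.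
  move=> i; have <- : quad A (adj (delta_mx 0 i *m P)) = D 0 i.
    rewrite /quad adjK adjM adj_delta {1}eA iP.
    rewrite !mulmxA -[_ *m P *m adj P]mulmxA PP mulmx1.
    rewrite -!mulmxA [P *m (adj P *m _)]mulmxA PP mul1mx mulmxA.
    by rewrite -rowE -colE !mxE eqxx mulr1n.
  exact: qA.
rewrite {1}eA iP diag_mx_sum_delta mulmx_sumr mulmx_suml; apply: eq_bigr => i _.
rewrite adjK adjM adj_delta -scalemxAr -scalemxAl; congr (_ *: _).
by rewrite !mulmxA -[adj P *m _ *m _]mulmxA mul_delta_mx.
Qed.


Lemma kron_sumL (I : finType) m1 n1 m2 n2 (F : I -> 'M[C]_(m1, n1)) (B : 'M[C]_(m2, n2)) :
  kron (\sum_i F i) B = \sum_i kron (F i) B.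
Proof.
apply/matrixP => i j; rewrite /kron !mxE !summxE mulr_suml.
by apply: eq_bigr => h _; rewrite !mxE.
Qed.

Lemma kron_sumR (I : finType) m1 n1 m2 n2 (A : 'M[C]_(m1, n1)) (F : I -> 'M[C]_(m2, n2)) :
  kron A (\sum_i F i) = \sum_i kron A (F i).
Proof.
apply/matrixP => i j; rewrite /kron !mxE !summxE mulr_sumr.
by apply: eq_bigr => h _; rewrite !mxE.
Qed.

Lemma kron_scaleL m1 n1 m2 n2 a (A : 'M[C]_(m1, n1)) (B : 'M[C]_(m2, n2)) :
  kron (a *: A) B = a *: kron A B.
Proof. by apply/matrixP => i j; rewrite /kron !mxE mulrA. Qed.

Lemma kron_scaleR m1 n1 m2 n2 a (A : 'M[C]_(m1, n1)) (B : 'M[C]_(m2, n2)) :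
  kron A (a *: B) = a *: kron A B.
Proof. by apply/matrixP => i j; rewrite /kron !mxE mulrCA. Qed.

Definition bp m n (M : 'M[C]_(m * n)) : Prop :=
  forall (x : 'cV[C]_m) (y : 'cV[C]_n), 0 <= quad M (kron x y).

Lemma tr_kron_rank1 m n (M : 'M[C]_(m * n)) (x : 'cV[C]_m) (y : 'cV[C]_n) :
  \tr (M *m kron (x *m adj x) (y *m adj y)) = quad M (kron x y).
Proof. by rewrite -kron_mul -adj_kron tr_rank1. Qed.

Lemma bp_tr_kron m n (M : 'M[C]_(m * n)) A B :
  bp M -> psd A -> psd B -> 0 <= \tr (M *m kron A B).
Proof.
move=> bM /psd_decomp [a [u [a0 ->]]] /psd_decomp [b [w [b0 ->]]].
rewrite kron_sumL mulmx_sumr raddf_sum /=; apply: sumr_ge0 => k _.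
rewrite kron_scaleL kron_sumR -scalemxAr mxtraceZ; apply: mulr_ge0 => //.
rewrite mulmx_sumr raddf_sum /=; apply: sumr_ge0 => l _.
rewrite kron_scaleR -scalemxAr mxtraceZ; apply: mulr_ge0 => //.
by rewrite tr_kron_rank1.
Qed.

Lemma bp_sep m n (M : 'M[C]_(m * n)) s : bp M -> separable m n s -> 0 <= \tr (M *m s).
Proof.
move=> bM [N [p [A [B [h [_ ->]]]]]].
rewrite mulmx_sumr raddf_sum /=; apply: sumr_ge0 => i _.
have [p0 [[sA _] [sB _]]] := h i.
by rewrite -scalemxAr mxtraceZ mulr_ge0 // bp_tr_kron.
Qed.

Lemma psd_tr k (M r : 'M[C]_k) : psd M -> psd r -> 0 <= \tr (M *m r).
Proof.
move=> [_ qM] /psd_decomp [d [u [d0 ->]]].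
rewrite mulmx_sumr raddf_sum /=; apply: sumr_ge0 => i _.
rewrite -scalemxAr mxtraceZ; apply: mulr_ge0 => //; rewrite tr_rank1; exact: qM.
Qed.


Lemma quadZ k a (M : 'M[C]_k) v : quad (a *: M) v = a * quad M v.
Proof. by rewrite /quad -scalemxAr -scalemxAl mxE. Qed.

Lemma quad_lproj k l (A : 'M[C]_(l, k)) (M : 'M[C]_k) v :
  quad (A *m M *m adj A) v = quad M (adj A *m v).
Proof. by rewrite /quad adjM adjK !mulmxA. Qed.

Lemma quad0 k (M : 'M[C]_k) : quad M 0 = 0.
Proof. by rewrite /quad mulmx0 mxE. Qed.

Lemma herm_lproj k l (A : 'M[C]_(l, k)) (M : 'M[C]_k) :
  Defs.hermitian M -> Defs.hermitian (A *m M *m adj A).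
Proof. by move=> hM; rewrite /Defs.hermitian !adjM adjK hM mulmxA. Qed.

Definition nrm k (x : 'cV[C]_k) : C := (adj x *m x) 0 0.

Lemma rank1_state k (x : 'cV[C]_k) : x != 0 -> state ((nrm x)^-1 *: (x *m adj x)).
Proof.
move=> xn0; have c0 := adjv_gt0 xn0; rewrite -/(nrm x) in c0.
have ci0 : 0 <= (nrm x)^-1 by rewrite invr_ge0 ltW.
split; first split.
- by rewrite /Defs.hermitian adjZ geC0_conj // adjM adjK.
- move=> v; rewrite -/(quad _ v) quadZ mulr_ge0 //.
  rewrite /quad; have -> : adj v *m (x *m adj x) *m v = adj (adj x *m v) *m (adj x *m v).
    by rewrite adjM adjK !mulmxA.
  exact: adjv_ge0.
- by rewrite mxtraceZ mxtrace_mulC trace_mx11 -/(nrm x) mulVf // gt_eqF.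
Qed.

Lemma tr_scale_rank1 k (M : 'M[C]_k) (x : 'cV[C]_k) a :
  \tr (M *m (a *: (x *m adj x))) = a * quad M x.
Proof. by rewrite -scalemxAr mxtraceZ tr_rank1. Qed.

Lemma EW_bp m n (W : 'M[C]_(m * n)) : EW m n W -> bp W.
Proof.
move=> [hW [sW _]] x y.
have [->|xn0] := eqVneq x 0; first by rewrite /kron tens0mx quad0.
have [->|yn0] := eqVneq y 0; first by rewrite /kron tensmx0 quad0.
have sx := rank1_state xn0; have sy := rank1_state yn0.
have cx := adjv_gt0 xn0; have cy := adjv_gt0 yn0.
rewrite -/(nrm x) in cx; rewrite -/(nrm y) in cy.
have sep : separable m n (kron ((nrm x)^-1 *: (x *m adj x)) ((nrm y)^-1 *: (y *m adj y))).
  exists 1%N, (fun _ => 1), (fun _ => (nrm x)^-1 *: (x *m adj x)),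
  (fun _ => (nrm y)^-1 *: (y *m adj y)).
  split; first by move=> _; split; [exact: ler01 | split].
  by rewrite !big_ord1 scale1r.
have := sW _ sep.
rewrite kron_scaleL kron_scaleR scalerA -scalemxAr mxtraceZ tr_kron_rank1.
by rewrite pmulr_rge0 // mulr_gt0 // invr_gt0.
Qed.

Lemma bp_lproj m n p q (U : 'M[C]_(p, m)) (V : 'M[C]_(q, n)) (M : 'M[C]_(m * n)) :
  bp M -> bp (lproj U V M).
Proof.
move=> bM x y; rewrite /lproj quad_lproj adj_kron (kron_mul (adj U) (adj V) x y); exact: bM.
Qed.

Lemma EW_of m n (M : 'M[C]_(m * n)) :
  Defs.hermitian M -> bp M -> (exists x, quad M x < 0) -> EW m n M.
Proof.
move=> hM bM [x qx].
have xn0 : x != 0 by apply: contraTneq qx => ->; rewrite quad0 ltxx.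
have cx := adjv_gt0 xn0; rewrite -/(nrm x) in cx.
split => //; split; first by move=> s; exact: bp_sep.
exists ((nrm x)^-1 *: (x *m adj x)); split; first exact: rank1_state.
have neg : \tr (M *m ((nrm x)^-1 *: (x *m adj x))) < 0.
  by rewrite tr_scale_rank1 pmulr_rlt0 // invr_gt0.
split => //; move=> /(bp_sep bM) h.
by have := lt_le_trans neg h; rewrite ltxx.
Qed.

Lemma notpsd_neg k (M : 'M[C]_k) : Defs.hermitian M -> ~ psd M -> exists x, quad M x < 0.
Proof.
move=> hM npM; apply: NNPP => hn; apply: npM; split => // v.
have := quad_real v hM; rewrite -/(quad M v).
move=> rq; case: (boolP (0 <= quad M v)) => // h.
exfalso; apply: hn; exists v; rewrite real_ltNge //; exact: real0.
Qed.

Lemma psd_notEW m n (M : 'M[C]_(m * n)) : psd M -> ~ EW m n M.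
Proof.
move=> pM [_ [_ [r [[pr _] [_ neg]]]]].
have h := psd_tr pM pr.
by have := lt_le_trans neg h; rewrite ltxx.
Qed.


Lemma ptransE m n (M : 'M[C]_(m * n)) a b c d :
  ptrans m n M (mxtens_index (a, b)) (mxtens_index (c, d)) =
  M (mxtens_index (c, b)) (mxtens_index (a, d)).
Proof. by rewrite /ptrans mxE !mxtens_indexK. Qed.

Lemma kronE m1 n1 m2 n2 (A : 'M[C]_(m1, n1)) (B : 'M[C]_(m2, n2)) a b c d :
  kron A B (mxtens_index (a, b)) (mxtens_index (c, d)) = A a c * B b d.
Proof. exact: tensmxE. Qed.

Lemma ptrans_adj m n (M : 'M[C]_(m * n)) : adj (ptrans m n M) = ptrans m n (adj M).
Proof.
apply/matrixP => i j.
case: (mxtens_indexP i) => a b; case: (mxtens_indexP j) => c d.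
by rewrite adjE !ptransE adjE.
Qed.

Lemma sum_tens p q (F : 'I_(p * q) -> C) :
  \sum_(k < p * q) F k = \sum_(a < p) \sum_(b < q) F (mxtens_index (a, b)).
Proof.
rewrite pair_big /=; apply: reindex => /=.
by exists (@mxtens_unindex p q) => k _; rewrite (mxtens_indexK, mxtens_unindexK) //= -surjective_pairing.
Qed.

Lemma mulmx3E k l r s (A : 'M[C]_(k, l)) (B : 'M[C]_(l, r)) (D : 'M[C]_(r, s)) i j :
  (A *m B *m D) i j = \sum_(x < l) \sum_(y < r) A i x * B x y * D y j.
Proof.
rewrite mxE exchange_big /=; apply: eq_bigr => y _.
by rewrite mxE mulr_suml.
Qed.

Lemma swap13 (I1 I2 I3 : finType) (F : I1 -> I2 -> I3 -> C) :
  \sum_(i : I1) \sum_(j : I2) \sum_(k : I3) F i j k =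
  \sum_(k : I3) \sum_(j : I2) \sum_(i : I1) F i j k.
Proof.
under eq_bigr do rewrite exchange_big.
rewrite exchange_big.
by under eq_bigr do rewrite exchange_big.
Qed.

Lemma lproj_ptrans m n p q (U : 'M[C]_(p, m)) (V : 'M[C]_(q, n)) (M : 'M[C]_(m * n)) :
  lproj U V (ptrans m n M) = ptrans p q (lproj (map_mx Num.conj U) V M).
Proof.
apply/matrixP => i j.
case: (mxtens_indexP i) => a b; case: (mxtens_indexP j) => c d.
rewrite ptransE /lproj !mulmx3E !sum_tens.
under eq_bigr => x1 _ do under eq_bigr => x2 _ do rewrite sum_tens.
under [RHS]eq_bigr => x1 _ do under eq_bigr => x2 _ do rewrite sum_tens.
rewrite swap13; apply: eq_bigr => l1 _; apply: eq_bigr => k2 _.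
apply: eq_bigr => k1 _; apply: eq_bigr => l2 _.
rewrite !adj_kron !kronE ptransE !adjE !mxE conjCK.
ring.
Qed.


Lemma herm_ptrans m n (M : 'M[C]_(m * n)) :
  Defs.hermitian M -> Defs.hermitian (ptrans m n M).
Proof. by move=> hM; rewrite /Defs.hermitian ptrans_adj hM. Qed.

Lemma idx00 : (0 : 'I_(1 * 1)) = mxtens_index ((0 : 'I_1), (0 : 'I_1)).
Proof. by apply: val_inj. Qed.

Lemma psd_bp_ptrans m n (r : 'M[C]_(m * n)) : psd r -> bp (ptrans m n r).
Proof.
move=> [_ qr] x y.
have -> : quad (ptrans m n r) (kron x y) = (lproj (adj x) (adj y) (ptrans m n r)) 0 0.
  by rewrite /lproj /quad adj_kron !adjK -adj_kron.
rewrite lproj_ptrans idx00 ptransE -idx00 /lproj.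
set K := kron _ _.
have := qr (adj K); rewrite /quad adjK //.
Qed.

Lemma lprojD m n p q (U : 'M[C]_(p, m)) (V : 'M[C]_(q, n)) (A B : 'M[C]_(m * n)) :
  lproj U V (A + B) = lproj U V A + lproj U V B.
Proof. by rewrite /lproj mulmxDr mulmxDl. Qed.


Lemma adj1 k : adj (1%:M : 'M[C]_k) = 1%:M.
Proof. by apply/matrixP => i j; rewrite adjE !mxE conjC_nat eq_sym. Qed.

Lemma part1_key n (x : 'cV[C]_(2 * n)) :
  let X : 'M[C]_(n, 2) := \matrix_(b, a) x (mxtens_index (a, b)) 0 in
  let y : 'cV[C]_(2 * 2) := \col_k (if (mxtens_unindex k).1 == (mxtens_unindex k).2
                                    then 1 else 0) in
  adj (kron (1%:M : 'M[C]_2) (adj X)) *m y = x.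
Proof.
move=> X y; rewrite adj_kron adj1 adjK.
apply/matrixP => i j; rewrite (ord1 j); case: (mxtens_indexP i) => a b.
rewrite mxE sum_tens (bigD1 a) //= [X in _ + X]big1 ?addr0; last first.
  move=> a' na'; apply: big1 => c _; rewrite kronE !mxE mxtens_indexK /=.
  by rewrite eq_sym (negbTE na') mul0r mul0r.
rewrite (bigD1 a) //= [X in _ + X]big1 ?addr0; last first.
  move=> c nc; rewrite kronE !mxE mxtens_indexK /= eq_sym (negbTE nc).
  by rewrite mulr0.
by rewrite kronE !mxE mxtens_indexK /= !eqxx mul1r mulr1.
Qed.

End Aux.

Unset Implicit Arguments.

Theorem lemma9 (R : realType) :
  (* (i) *)
  (forall (m n : nat) (W : 'M[complex R]_(m * n)),
     EW m n W ->
     forall (U : 'M[complex R]_(2, m)) (V : 'M[complex R]_(n, n)),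
       EW 2 n (lproj U V W) ->
       exists (P : 'M[complex R]_(2, 2)) (Q : 'M[complex R]_(2, n)),
         EW 2 2 (lproj P Q (lproj U V W))) /\
  (* (ii) *)
  (forall (m n : nat) (r : 'M[complex R]_(m * n)),
     state r -> NPT m n r -> undistillable1 m n r ->
     EW m n (ptrans m n r) /\
     forall (U : 'M[complex R]_(2, m)) (V : 'M[complex R]_(n, n)),
       ~ EW 2 n (lproj U V (ptrans m n r))) /\
  (* (iii) *)
  (forall (m n : nat) (W : 'M[complex R]_(m * n)),
     EW m n W ->
     forall (p q : nat) (U : 'M[complex R]_(p, m)) (V : 'M[complex R]_(q, n)),
       EW p q (lproj U V W) ->
       ~ decomposable p q (lproj U V W) ->
       (exists r : 'M[complex R]_(p * q),
          state r /\ PPT p q r /\ ~ separable p q r /\ detects (lproj U V W) r) ->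
       ~ decomposable m n W).
Proof.
split; [|split].
- move=> m n W hW U V hW'.
  set W' := lproj U V W in hW' *.
  have hW'h : Defs.hermitian W' by case: hW'.
  have npsd : ~ psd W' by move=> p; exact: (psd_notEW p hW').
  have [x qx] := notpsd_neg hW'h npsd.
  set X : 'M[complex R]_(n, 2) := \matrix_(b, a) x (mxtens_index (a, b)) 0.
  exists 1%:M, (adj X); apply: EW_of.
  + exact: herm_lproj.
  + exact: bp_lproj (EW_bp hW').
  + exists (\col_k (if (mxtens_unindex k).1 == (mxtens_unindex k).2 then 1 else 0)).
    by rewrite /lproj quad_lproj part1_key.
- move=> m n r sr nr ur.
  have [pr _] := sr; have hr := pr.1.
  split.
  + apply: EW_of; first exact: herm_ptrans.
      exact: psd_bp_ptrans.
    exact: notpsd_neg (herm_ptrans hr) nr.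
  + move=> U V; rewrite lproj_ptrans; apply: psd_notEW.
    exact: ur (map_mx Num.conj U) V.
- move=> m n W _ p q U V _ nd _ [X [Y [pX [pY eW]]]].
  apply: nd; exists (lproj (map_mx Num.conj U) V X), (lproj U V Y).
  split; first exact: psd_lproj.
  split; first exact: psd_lproj.
  by rewrite eW lprojD lproj_ptrans.
Qed.
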